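(* Let $(X_i)_{i\in\mathbb{Z}}$ be a stationary strongly nonergodic process over a finite alphabet $\mathbb{X}$, with associated IID binary process $(Z_k)_{k\in\mathbb{N}}$ ($P(Z_k=0)=P(Z_k=1)=\tfrac12$) and functions $s_k:\mathbb{X}^*\to\{0,1\}$ satisfying $\lim_{n\to\infty}P(s_k(X_{t+1:t+n})=Z_k)=1$ for all $k\in\mathbb{N}$, $t\in\mathbb{Z}$. Let $\delta\in(\tfrac12,1)$, $U_\delta(n):=\{k\in\mathbb{N}:P(s_k(X_{1:n})=Z_k)\ge\delta\}$ and $$H^U(n):=hn+[\log2-\eta(\delta)]\operatorname{card}U_\delta(n),\qquad \eta(p):=-p\log p-(1-p)\log(1-p).$$ Then $H(n)\ge H^U(n)$ for all $n$, and $$\lim_{n\to\infty}H(n)/n=h=\lim_{n\to\infty}H^U(n)/n.$$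
   Context: $H(n):=H(X_{t+1:t+n})=-\mathbb{E}\log P(X_{t+1:t+n})$ (natural log), $h:=\lim_n H(n)/n$ is the entropy rate. A process is strongly nonergodic if such $(Z_k)$ and $s_k$ as in the claim exist. *)

(* Defs.v *)
From HB Require Import structures.
From mathcomp Require Import all_boot all_order all_algebra.
From mathcomp Require Import all_classical all_reals all_analysis.
Set Implicit Arguments. Unset Strict Implicit. Unset Printing Implicit Defensive.
Import Order.TTheory GRing.Theory Num.Theory numFieldNormedType.Exports.
Local Open Scope classical_set_scope.
Local Open Scope ring_scope.

Section Process.
Context {R : realType} {d : measure_display} {Omega : measurableType d}
        {A : finType}.

Definition blk (X : int -> Omega -> A) (t : int) (n : nat) (o : Omega)
  : n.-tuple A := [tuple X (t + (i.+1)%:Z)%R o | i < n].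

Definition process_measurable (X : int -> Omega -> A) : Prop :=
  forall (i : int) (a : A), measurable [set o | X i o = a].

Definition stationary (P : probability Omega R) (X : int -> Omega -> A) : Prop :=
  forall (t : int) (n : nat) (w : n.-tuple A),
    P [set o | blk X t n o = w] = P [set o | blk X 0 n o = w].

(* block entropy H(n) = H(X_{1:n}) with the natural logarithm (0 ln 0 = 0) *)
Definition block_entropy (P : probability Omega R) (X : int -> Omega -> A)
  (n : nat) : R :=
  - \sum_(w : n.-tuple A)
      fine (P [set o | blk X 0 n o = w]) * ln (fine (P [set o | blk X 0 n o = w])).

Definition entropy_rate (P : probability Omega R) (X : int -> Omega -> A) : R :=
  limn ((fun n => block_entropy P X n / n%:R) : R^nat).

Definition iid_fair_bits (P : probability Omega R) (Z : nat -> Omega -> bool)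
  : Prop :=
  [/\ forall k b, measurable [set o | Z k o = b],
      forall k b, P [set o | Z k o = b] = (2^-1)%:E &
      forall (s : seq nat) (b : nat -> bool), uniq s ->
        fine (P (\big[setI/setT]_(k <- s) [set o | Z k o = b k]))
        = \prod_(k <- s) fine (P [set o | Z k o = b k])].

Definition strongly_nonergodic_with (P : probability Omega R)
  (X : int -> Omega -> A) (Z : nat -> Omega -> bool) (s : nat -> seq A -> bool)
  : Prop :=
  iid_fair_bits P Z /\
  forall (k : nat) (t : int),
    (fun n => fine (P [set o | s k (blk X t n o) = Z k o])) @ \oo --> (1 : R).

Definition U_set (P : probability Omega R) (X : int -> Omega -> A)
  (Z : nat -> Omega -> bool) (s : nat -> seq A -> bool) (delta : R) (n : nat)
  : set nat :=
  [set k | (delta%:E <= P [set o | s k (blk X 0 n o) = Z k o])%E].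

End Process.

Definition eta {R : realType} (p : R) : R :=
  - p * ln p - (1 - p) * ln (1 - p).

(* cardinality of a set of naturals, in extended reals (+oo if infinite) *)
Definition ecard {R : realType} (U : set nat) : \bar R :=
  (\sum_(k <oo) (if `[< U k >] then 1 else 0)%:E)%E.

Definition HU {R : realType} {d : measure_display} {Omega : measurableType d}
  {A : finType} (P : probability Omega R) (X : int -> Omega -> A)
  (Z : nat -> Omega -> bool) (s : nat -> seq A -> bool) (delta : R) (n : nat)
  : \bar R :=
  ((entropy_rate P X * n%:R)%:E
   + (ln 2 - eta delta)%:E * ecard (U_set P X Z s delta n))%E.

(* Main.v *)
Require Import Defs.
From HB Require Import structures.
From mathcomp Require Import all_boot all_order all_algebra.
From mathcomp Require Import all_classical all_reals all_analysis.
Import Order.TTheory GRing.Theory Num.Theory numFieldNormedType.Exports.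
Local Open Scope classical_set_scope.
Local Open Scope ring_scope.
From mathcomp Require Import ring lra.
Section Ent.
Context {R : realType} {d : measure_display} {Omega : measurableType d}
  (P : probability Omega R).

Definition rv {T : finType} (f : Omega -> T) := forall v, measurable [set o | f o = v].
Definition pm {T : finType} (f : Omega -> T) (v : T) : R := fine (P [set o | f o = v]).
Definition Hn {T : finType} (f : Omega -> T) : R := - \sum_v pm f v * ln (pm f v).

Lemma pmE {T : finType} {f : Omega -> T} v : rv f -> P [set o | f o = v] = (pm f v)%:E.
Proof. by move=> hf; rewrite /pm fineK// fin_num_measure. Qed.

Lemma pm_ge0 {T : finType} {f : Omega -> T} v : 0 <= pm f v.
Proof. by rewrite /pm fine_ge0. Qed.

Lemma sum_list {T : finType} {f : Omega -> T} (Q : pred T) (r : seq T) :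
  rv f -> uniq r ->
  measurable [set o | (f o \in r) && Q (f o)] /\
  P [set o | (f o \in r) && Q (f o)] = (\sum_(v <- r | Q v) pm f v)%:E.
Proof.
move=> hf; elim: r => [|v r IH] /=.
  rewrite big_nil (_ : [set o | _] = set0); first by rewrite measure0.
  by apply/seteqP; split => o //=.
move=> /andP[vr ur]; have [m1 e1] := IH ur.
have E : [set o | (f o \in v :: r) && Q (f o)] =
  (if Q v then [set o | f o = v] else set0) `|` [set o | (f o \in r) && Q (f o)].
  apply/seteqP; split => o /=; rewrite in_cons.
    case/andP => /orP[/eqP fv|fr] Qf; first by left; rewrite -fv Qf.
    by right; rewrite fr Qf.
  case=> [|/andP[->->]]; last by rewrite orbT.
  by case: ifP => // Qv ->; rewrite eqxx Qv.
have mA : measurable (if Q v then [set o | f o = v] else set0).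
  by case: ifP.
rewrite E; split; first exact: measurableU.
rewrite (measureU P) //; last first.
  apply/seteqP; split => o //= [+ /andP[fr _]]; case: ifP => // _ fv.
  by rewrite fv (negbTE vr) in fr.
rewrite big_cons; case: ifP => Qv.
  by rewrite /= pmE // EFinD; congr (_ + _)%E; exact: e1.
by rewrite /= measure0 add0e; exact: e1.
Qed.

Lemma sum_pred {T : finType} {f : Omega -> T} (Q : pred T) :
  rv f -> measurable [set o | Q (f o)] /\
  P [set o | Q (f o)] = (\sum_(v | Q v) pm f v)%:E.
Proof.
move=> hf; have [m e] := sum_list Q (index_enum T) hf (index_enum_uniq T).
have E : [set o | Q (f o)] = [set o | (f o \in index_enum T) && Q (f o)].
  by apply/seteqP; split => o /=; rewrite mem_index_enum.
by rewrite E; split.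
Qed.

Lemma rv_comp {T U : finType} {f : Omega -> T} (phi : T -> U) :
  rv f -> rv (phi \o f).
Proof.
move=> hf u; have [m _] := sum_pred (fun v => phi v == u) hf.
by rewrite (_ : [set o | _] = [set o | phi (f o) == u]) //; apply/seteqP; split => o /= /eqP.
Qed.

Lemma pm_comp {T U : finType} {f : Omega -> T} (phi : T -> U) u :
  rv f -> pm (phi \o f) u = \sum_(v | phi v == u) pm f v.
Proof.
move=> hf; have [_ e] := sum_pred (fun v => phi v == u) hf.
rewrite /pm (_ : [set o | _] = [set o | phi (f o) == u]) ?e //.
by apply/seteqP; split => o /= /eqP.
Qed.

Lemma pm_sum1 {T : finType} {f : Omega -> T} : rv f -> \sum_v pm f v = 1.
Proof.
move=> hf; have [_ e] := sum_pred xpredT hf.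
have E : [set o : Omega | xpredT (f o)] = setT by apply/seteqP; split.
move: e; rewrite E probability_setT => -[] //.
Qed.

Lemma pm_le1 {T : finType} {f : Omega -> T} v : rv f -> pm f v <= 1.
Proof.
move=> hf; rewrite -(pm_sum1 hf) (bigD1 v) //= lerDl.
by apply: sumr_ge0 => *; exact: pm_ge0.
Qed.

Lemma marginal {T U : finType} {f : Omega -> T} (phi : T -> U) (G : U -> R) :
  rv f -> \sum_v pm f v * G (phi v) = \sum_u pm (phi \o f) u * G u.
Proof.
move=> hf; under [RHS]eq_bigr => u _ do rewrite pm_comp // big_distrl /=.
rewrite (partition_big phi xpredT) //=; apply: eq_bigr => u _.
by apply: eq_bigr => v /eqP ->.
Qed.

Lemma pm_comp_ge {T U : finType} {f : Omega -> T} (phi : T -> U) v :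
  rv f -> pm f v <= pm (phi \o f) (phi v).
Proof.
move=> hf; rewrite pm_comp // (bigD1 v) //= lerDl.
by apply: sumr_ge0 => *; exact: pm_ge0.
Qed.


Definition pr {T U : finType} (f : Omega -> T) (g : Omega -> U) : Omega -> T * U :=
  fun o => (f o, g o).

Lemma rv_pr {T U : finType} {f : Omega -> T} {g : Omega -> U} :
  rv f -> rv g -> rv (pr f g).
Proof.
move=> hf hg [a b]; rewrite (_ : [set o | _] = [set o | f o = a] `&` [set o | g o = b]).
  exact: measurableI.
by apply/seteqP; split => o /=; rewrite /pr; [case=> -> -> | case=> -> ->].
Qed.

Lemma Hn_marg {T U : finType} {f : Omega -> T} (phi : T -> U) :
  rv f -> Hn (phi \o f) = - \sum_v pm f v * ln (pm (phi \o f) (phi v)).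
Proof. by move=> hf; rewrite /Hn (marginal phi (fun u => ln (pm (phi \o f) u))). Qed.

Lemma Hn_inj {T U : finType} {f : Omega -> T} (phi : T -> U) :
  injective phi -> rv f -> Hn (phi \o f) = Hn f.
Proof.
move=> iphi hf; rewrite Hn_marg //; congr (- _); apply: eq_bigr => v _.
rewrite pm_comp // (eq_bigl (pred1 v)) ?big_pred1_eq // => w /=.
by apply/eqP/eqP => [/iphi|->].
Qed.

Lemma Hn_injE {T U : finType} {f : Omega -> T} {h : Omega -> U} (phi : T -> U) :
  injective phi -> rv f -> (forall o, h o = phi (f o)) -> Hn h = Hn f.
Proof. by move=> i hf e; rewrite (_ : h = phi \o f) ?Hn_inj //; exact: funext. Qed.

Lemma xlnx_le0 (x : R) : 0 <= x <= 1 -> x * ln x <= 0.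
Proof.
by case/andP => x0 x1; rewrite mulr_ge0_le0 // ln_le0.
Qed.

Lemma Hn_ge0 {T : finType} {f : Omega -> T} : rv f -> 0 <= Hn f.
Proof.
move=> hf; rewrite /Hn oppr_ge0; apply: sumr_le0 => v _.
by apply: xlnx_le0; rewrite pm_ge0 pm_le1.
Qed.

Lemma gibbs_term (x y : R) : 0 <= x -> 0 <= y -> (0 < x -> 0 < y) ->
  x * ln y - x * ln x <= y - x.
Proof.
move=> x0 y0 xy; have [->|xp] := eqVneq x 0; first by rewrite !mul0r subr0 subr0.
have xp' : 0 < x by rewrite lt0r xp x0.
have yp := xy xp'.
rewrite -mulrBr -ln_div ?posrE //.
have H : ln (y / x) <= y / x - 1.
  have := @le_ln1Dx R (y / x - 1); rewrite addrCA subrr addr0; apply.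
  by rewrite ltrBrDl subrr divr_gt0.
apply: le_trans (ler_wpM2l x0 H) _.
by rewrite le_eqVlt; apply/orP; left; apply/eqP; field.
Qed.

Lemma gibbs {T : finType} {f : Omega -> T} (r : T -> R) : rv f ->
  (forall v, 0 <= r v) -> (forall v, 0 < pm f v -> 0 < r v) ->
  \sum_v r v <= 1 -> Hn f <= - \sum_v pm f v * ln (r v).
Proof.
move=> hf r0 rp r1; rewrite /Hn lerN2 -subr_ge0 -sumrB.
apply: le_trans (_ : \sum_v (pm f v - r v) <= _).
  by rewrite sumrB pm_sum1 // subr_ge0.
apply: ler_sum => v _.
have := @gibbs_term _ _ (@pm_ge0 _ f v) (r0 v) (@rp v); lra.
Qed.

Lemma sum_snd {T U : finType} (G : T * U -> R) z :
  \sum_(p | p.2 == z) G p = \sum_x G (x, z).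
Proof.
transitivity (\sum_x \sum_(j | j == z) G (x, j)).
  by rewrite pair_big; apply: eq_big => -[].
by apply: eq_bigr => x _; rewrite big_pred1_eq.
Qed.

Lemma pm_snd {T U : finType} {h : Omega -> T * U} z : rv h ->
  pm (snd \o h) z = \sum_x pm h (x, z).
Proof. by move=> hh; rewrite pm_comp // sum_snd. Qed.

Lemma SSA {T1 T2 T3 : finType} {f : Omega -> T1} {g : Omega -> T2} {c : Omega -> T3} :
  rv f -> rv g -> rv c ->
  Hn (pr (pr f g) c) + Hn c <= Hn (pr f c) + Hn (pr g c).
Proof.
move=> hf hg hc.
pose F := pr (pr f g) c.
have hF : rv F by apply: rv_pr => //; exact: rv_pr.
pose fa := fun w : (T1 * T2) * T3 => (w.1.1, w.2).
pose fb := fun w : (T1 * T2) * T3 => (w.1.2, w.2).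
pose pa := pm (fa \o F). pose pb := pm (fb \o F). pose pc := pm (snd \o F).
pose r := fun w : (T1 * T2) * T3 => pa (fa w) * pb (fb w) / pc w.2.
have Ea : Hn (pr f c) = Hn (fa \o F) by [].
have Eb : Hn (pr g c) = Hn (fb \o F) by [].
have Ec : Hn c = Hn (snd \o F) by [].
have pos : forall w, 0 < pm F w -> [/\ 0 < pa (fa w), 0 < pb (fb w) & 0 < pc w.2].
  move=> w wp; split.
  - exact: lt_le_trans wp (pm_comp_ge _ _ hF).
  - exact: lt_le_trans wp (pm_comp_ge _ _ hF).
  - exact: lt_le_trans wp (pm_comp_ge snd _ hF).
have G : Hn F <= - \sum_w pm F w * ln (r w).
  apply: gibbs => //.
  - by move=> w; rewrite /r divr_ge0 ?mulr_ge0 ?pm_ge0.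
  - move=> w /pos[a b c']; rewrite /r divr_gt0 ?mulr_gt0 //.
  rewrite (eq_bigr (fun p => r (p.1, p.2))); last by case.
  rewrite -(pair_bigA _ (fun xy z => r (xy, z))) /=.
  rewrite (eq_bigr (fun p => \sum_z r ((p.1, p.2), z))); last by case.
  rewrite -(pair_bigA _ (fun x y => \sum_z r ((x, y), z))) /=.
  under eq_bigr => x _ do rewrite exchange_big /=.
  rewrite exchange_big /=.
  apply: le_trans (_ : _ <= \sum_z pc z) _; last by rewrite (pm_sum1 (rv_comp snd hF)).
  rewrite le_eqVlt; apply/orP; left; apply/eqP.
    apply: eq_bigr => z _.
    under eq_bigr => x _ do (under eq_bigr => y _ do rewrite /r /fa /fb /= -mulrA; rewrite -big_distrr /=).
    rewrite -big_distrl /= -mulr_suml.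
    have E1 : \sum_x pa (x, z) = pc z by rewrite /pa -(pm_snd _ (rv_comp fa hF)).
    have E2 : \sum_y pb (y, z) = pc z by rewrite /pb -(pm_snd _ (rv_comp fb hF)).
    rewrite E1 E2 mulrA; have [->|pz] := eqVneq (pc z) 0; first by rewrite !mul0r.
    by rewrite mulfK.
rewrite Ea Eb Ec !Hn_marg //.
have tw : forall w, pm F w * ln (r w) =
    pm F w * ln (pa (fa w)) + pm F w * ln (pb (fb w)) - pm F w * ln (pc (snd w)).
  move=> w; have [->|wn] := eqVneq (pm F w) 0; first by rewrite !mul0r; lra.
  have wp : 0 < pm F w by rewrite lt0r wn pm_ge0.
  have [a b c'] := pos w wp.
  rewrite /r ln_div ?posrE ?mulr_gt0 // lnM ?posrE //; ring.
rewrite (eq_bigr _ (fun w _ => tw w)) !big_split /= sumrN in G.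
lra.
Qed.

Definition cu : Omega -> unit := fun _ => tt.

Lemma rv_cu : rv cu.
Proof.
by case; rewrite (_ : [set o | cu o = tt] = setT) //; apply/seteqP; split.
Qed.

Lemma Hn_cu : Hn cu = 0.
Proof.
have E : forall F : unit -> R, \sum_(u : unit) F u = F tt.
  by move=> F; rewrite (eq_bigl (pred1 tt)) ?big_pred1_eq //; case.
have := pm_sum1 rv_cu; rewrite /Hn !E => ->.
by rewrite ln1 mulr0 oppr0.
Qed.

Lemma Hn_pr_cu {T : finType} {f : Omega -> T} : rv f -> Hn (pr f cu) = Hn f.
Proof.
move=> hf; by apply: (Hn_injE (fun x => (x, tt))) => // x y [].
Qed.

Lemma subadd {T U : finType} {f : Omega -> T} {g : Omega -> U} :
  rv f -> rv g -> Hn (pr f g) <= Hn f + Hn g.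
Proof.
move=> hf hg; have := SSA hf hg rv_cu.
by rewrite Hn_cu addr0 !Hn_pr_cu //; exact: rv_pr.
Qed.

Lemma Hn_swap {T U : finType} {f : Omega -> T} {g : Omega -> U} :
  rv f -> rv g -> Hn (pr f g) = Hn (pr g f).
Proof.
move=> hf hg; apply: (Hn_injE (fun p => (p.2, p.1))) => //.
  by move=> [? ?] [? ?] [-> ->].
exact: rv_pr.
Qed.

Lemma Hn_mono {T U : finType} {f : Omega -> T} {g : Omega -> U} :
  rv f -> rv g -> Hn f <= Hn (pr g f).
Proof.
move=> hf hg; have := SSA hg hg hf.
have E : Hn (pr (pr g g) f) = Hn (pr g f).
  apply: (Hn_injE (fun w => ((w.1, w.1), w.2))) => //.
  - by move=> [? ?] [? ?] [-> _ ->].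
  - exact: rv_pr.
rewrite E; lra.
Qed.

Lemma DP {T U V : finType} {z : Omega -> V} {f : Omega -> T} (phi : T -> U) :
  rv z -> rv f ->
  Hn (pr z f) - Hn f <= Hn (pr z (phi \o f)) - Hn (phi \o f).
Proof.
move=> hz hf; have := SSA hz hf (rv_comp phi hf).
have E1 : Hn (pr (pr z f) (phi \o f)) = Hn (pr z f).
  apply: (Hn_injE (fun w => (w, phi w.2))) => //; last exact: rv_pr.
  by move=> x y [].
have E2 : Hn (pr f (phi \o f)) = Hn f.
  by apply: (Hn_injE (fun x => (x, phi x))) => // x y [].
rewrite E1 E2; lra.
Qed.

Definition eta' (p : R) : R := - p * ln p - (1 - p) * ln (1 - p).

Lemma Hn_bool {e : Omega -> bool} : rv e -> Hn e = eta' (pm e true).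
Proof.
move=> he; have := pm_sum1 he; rewrite big_bool /= => E.
rewrite /Hn big_bool /eta' /=.
have -> : pm e false = 1 - pm e true by lra.
lra.
Qed.

Lemma fano2 {a b : Omega -> bool} : rv a -> rv b ->
  Hn (pr a b) - Hn b <= eta' (pm (fun o => b o == a o) true).
Proof.
move=> ha hb.
have he : rv (fun o => b o == a o).
  by have := rv_comp (fun p : bool * bool => p.2 == p.1) (rv_pr ha hb).
have E : Hn (pr a b) = Hn (pr (fun o => b o == a o) b).
  apply: (Hn_injE (fun p : bool * bool => (if p.1 then p.2 else ~~ p.2, p.2))).
  - by move=> [[] []] [[] []].
  - exact: rv_pr.
  - by move=> o; rewrite /pr /=; case: (a o); case: (b o).
rewrite E; have := subadd he hb; rewrite -Hn_bool //; lra.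
Qed.

Definition bits (F : nat -> Omega -> bool) (s : seq nat) : Omega -> (size s).-tuple bool :=
  fun o => map_tuple (fun k => F k o) (in_tuple s).

Lemma cons_tuple_inj {T : Type} {n} {x y : T} {X Y : n.-tuple T} :
  cons_tuple x X = cons_tuple y Y -> x = y /\ X = Y.
Proof. by move/(congr1 val) => /= [-> /val_inj ->]. Qed.

Lemma rv_bits F s : (forall k, rv (F k)) -> rv (bits F s).
Proof.
move=> hF; elim: s => [|k s IH] /=.
  move=> v; rewrite (_ : [set o | _] = setT) //; apply/seteqP; split => o //= _.
  by rewrite (tuple0 v) (tuple0 (bits F [::] o)).
have -> : bits F (k :: s) = (fun p => cons_tuple p.1 p.2) \o pr (F k) (bits F s).
  by apply/funext => o; apply/val_inj.
by apply: rv_comp; apply: rv_pr.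
Qed.

Lemma FV (a b : nat -> Omega -> bool) : (forall k, rv (a k)) -> (forall k, rv (b k)) ->
  forall s, Hn (pr (bits a s) (bits b s)) - Hn (bits b s) <=
    \sum_(k <- s) eta' (pm (fun o => b k o == a k o) true).
Proof.
move=> ha hb; elim => [|k s IH].
  have E : Hn (pr (bits a [::]) (bits b [::])) = Hn (bits b [::]).
    apply: (Hn_injE (fun t => ([tuple], t))) => //; first by move=> ? ? [].
    - exact: rv_bits.
    - by move=> o; rewrite /pr (tuple0 (bits a [::] o)).
  by rewrite E big_nil subrr.
have hA := @rv_bits a s ha. have hB := @rv_bits b s hb.
have hC : rv (pr (b k) (bits b s)) by exact: rv_pr.
have E1 : Hn (pr (bits a (k :: s)) (bits b (k :: s))) =
          Hn (pr (pr (a k) (bits a s)) (pr (b k) (bits b s))).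
  apply: (Hn_injE (fun w => (cons_tuple w.1.1 w.1.2, cons_tuple w.2.1 w.2.2))).
  - move=> [[x X] [y Y]] [[x' X'] [y' Y']] e.
    have /= e1 := congr1 fst e. have /= e2 := congr1 snd e.
    case: (cons_tuple_inj e1) => -> ->.
    by case: (cons_tuple_inj e2) => -> ->.
  - by apply: rv_pr => //; exact: rv_pr.
  - by move=> o; congr (_, _); apply/val_inj.
have E2 : Hn (bits b (k :: s)) = Hn (pr (b k) (bits b s)).
  apply: (Hn_injE (fun w => cons_tuple w.1 w.2)) => //.
  - by move=> [x X] [y Y] /= e; case: (cons_tuple_inj e) => -> ->.
  - by move=> o; apply/val_inj.
have S := SSA (ha k) hA hC.
have D1 := DP fst (ha k) hC.
have D2 := DP snd hA hC.
have F2 := fano2 (ha k) (hb k).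
have E3 : Hn (pr (a k) (fst \o pr (b k) (bits b s))) = Hn (pr (a k) (b k)) by [].
have E4 : Hn (fst \o pr (b k) (bits b s)) = Hn (b k) by [].
have E5 : Hn (pr (bits a s) (snd \o pr (b k) (bits b s))) = Hn (pr (bits a s) (bits b s)) by [].
have E6 : Hn (snd \o pr (b k) (bits b s)) = Hn (bits b s) by [].
rewrite E3 E4 in D1; rewrite E5 E6 in D2.
rewrite big_cons E1 E2; lra.
Qed.

Lemma bits_set (Z : nat -> Omega -> bool) (s : seq nat) (l : seq bool) :
  uniq s -> size l = size s ->
  [set o | map (fun k => Z k o) s = l] =
  \big[setI/setT]_(k <- s) [set o | Z k o = nth false l (index k s)].
Proof.
elim: s l => [|k s IH] [|x l] //=.
  by move=> _ _; rewrite big_nil; apply/seteqP; split.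
move=> /andP[ks us] [sz].
rewrite big_cons /= eqxx /=.
rewrite (eq_big_seq (fun j => [set o | Z j o = nth false l (index j s)])); last first.
  move=> j js /=; rewrite (_ : (k == j) = false) //; apply/negbTE.
  by apply: contraNneq ks => ->.
rewrite -IH //; apply/seteqP; split => o /=.
  by case=> -> ->.
by case=> -> ->.
Qed.

Lemma prod_const_seq (s : seq nat) (c : R) : \prod_(k <- s) c = c ^+ size s.
Proof. by elim: s => [|k s IH]; rewrite ?big_nil ?big_cons ?IH ?exprS. Qed.

Lemma Hn_bitsZ (Z : nat -> Omega -> bool) (s : seq nat) :
  iid_fair_bits P Z -> uniq s -> Hn (bits Z s) = (size s)%:R * ln 2.
Proof.
move=> [mZ hZ iZ] us.
have hZr : forall k, rv (Z k) by move=> k v; exact: mZ.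
have pmt : forall t, pm (bits Z s) t = 2^-1 ^+ size s.
  move=> t; rewrite /pm.
  have -> : [set o | bits Z s o = t] = [set o | map (fun k => Z k o) s = val t].
    apply/seteqP; split => o /=; first by move=> <-.
    by move=> e; apply/val_inj.
  rewrite bits_set // ?size_tuple // iZ //.
  rewrite (eq_bigr (fun _ => 2^-1)) ?prod_const_seq // => k _.
  by rewrite hZ.
rewrite /Hn (eq_bigr (fun _ => 2^-1 ^+ size s * ln (2^-1 ^+ size s))); last first.
  by move=> t _; rewrite pmt.
rewrite sumr_const card_tuple card_bool lnXn ?invr_gt0 // lnV ?posrE //.
have h : 2^-1 ^+ size s * (2 ^ size s)%:R = 1 :> R.
  by rewrite natrX exprVn mulVf ?expf_neq0 ?pnatr_eq0.
have e1 : forall (x : R) n, x *+ n = x * n%:R by move=> x n; rewrite mulr_natr.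
rewrite (e1 (- ln 2)) (e1 (2^-1 ^+ size s * _)) mulrAC h mul1r; ring.
Qed.

End Ent.

Section Proc.
Context {R : realType} {d : measure_display} {Omega : measurableType d}
  (P : probability Omega R) {A : finType} (X : int -> Omega -> A).

Lemma val_blk t n o :
  val (blk X t n o) = map (fun i => X (t + (i.+1)%:Z) o) (iota 0 n).
Proof.
rewrite /blk /= -val_enum_ord -map_comp; apply: eq_map => i //.
Qed.

Lemma val_blk_cat t a b o :
  val (blk X t (a + b) o) = val (blk X t a o) ++ val (blk X (t + a%:Z) b o).
Proof.
rewrite !val_blk iotaD map_cat; congr (_ ++ _).
rewrite add0n -{1}(addn0 a) iotaDl -map_comp.
apply: eq_map => i /=; congr (X _ o).
by rewrite -addnS PoszD addrA.
Qed.

Lemma cat_inj2 {T : eqType} {n m} {x x' : n.-tuple T} {y y' : m.-tuple T} :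
  (x : seq T) ++ y = (x' : seq T) ++ y' -> x = x' /\ y = y'.
Proof.
move=> /eqP; rewrite eqseq_cat ?size_tuple // => /andP[/eqP e1 /eqP e2].
by split; apply/val_inj.
Qed.

Hypothesis hX : process_measurable X.

Lemma rv_blk t n : rv (blk X t n).
Proof.
elim: n t => [|n IH] t.
  move=> v; rewrite (_ : [set o | _] = setT) //; apply/seteqP; split => o //= _.
  by rewrite (tuple0 v) (tuple0 (blk X t 0 o)).
have h1 : rv (blk X t 1).
  have -> : blk X t 1 = (fun a => [tuple a]) \o X (t + 1%:Z).
    by apply/funext => o; apply/val_inj; exact: val_blk t 1 o.
  apply: (rv_comp P) => v; exact: hX.
have -> : blk X t (1 + n) = (fun p : 1.-tuple A * n.-tuple A => cat_tuple p.1 p.2)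
    \o pr (blk X t 1) (blk X (t + 1%:Z) n).
  by apply/funext => o; apply/val_inj; exact: val_blk_cat.
exact: (rv_comp P (fun p : 1.-tuple A * n.-tuple A => cat_tuple p.1 p.2) (rv_pr h1 (IH (t + 1%:Z)))).
Qed.

Lemma Hn_blk_cat t a b :
  Hn P (blk X t (a + b)) = Hn P (pr (blk X t a) (blk X (t + a%:Z) b)).
Proof.
apply: (Hn_injE P (fun p : a.-tuple A * b.-tuple A => cat_tuple p.1 p.2)).
- by move=> [x y] [x' y'] /(congr1 val) /= /cat_inj2 [-> ->].
- by apply: rv_pr; exact: rv_blk.
- by move=> o; apply/val_inj; exact: val_blk_cat.
Qed.

Definition Hb n := Hn P (blk X 0 n).

Hypothesis hS : stationary P X.

Lemma Hn_stat t n : Hn P (blk X t n) = Hb n.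
Proof. by rewrite /Hb /Hn; congr (- _); apply: eq_bigr => w _; rewrite /pm hS. Qed.

Lemma Hb_ssa a b c : Hb (a + (b + c)) + Hb b <= Hb (a + b) + Hb (b + c).
Proof.
have hf := rv_blk 0 a. have hc := rv_blk a%:Z b. have hg := rv_blk (a + b)%N%:Z c.
have := SSA P hf hg hc.
have E1 : Hn P (pr (pr (blk X 0 a) (blk X (a + b)%N%:Z c)) (blk X a%:Z b)) = Hb (a + (b + c)).
  rewrite /Hb; symmetry.
  apply: (Hn_injE P (fun w : (a.-tuple A * c.-tuple A) * b.-tuple A => cat_tuple w.1.1 (cat_tuple w.2 w.1.2))).
  - move=> [[x y] z] [[x' y'] z'] /(congr1 val) /= /cat_inj2 [-> /(congr1 val) /=].
    by move=> /cat_inj2 [-> ->].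
  - by apply: rv_pr => //; exact: rv_pr.
  - move=> o; apply/val_inj; apply: etrans (val_blk_cat 0 a (b + c) o) _.
    rewrite /= add0r; congr (_ ++ _).
    by apply: etrans (val_blk_cat a%:Z b c o) _; rewrite PoszD.
have E2 : Hn P (pr (blk X 0 a) (blk X a%:Z b)) = Hb (a + b).
  by rewrite /Hb Hn_blk_cat add0r.
have E3 : Hn P (pr (blk X (a + b)%N%:Z c) (blk X a%:Z b)) = Hb (b + c).
  rewrite -(Hn_stat a%:Z) Hn_blk_cat (Hn_swap P); first by rewrite PoszD.
  - exact: rv_blk.
  - exact: rv_blk.
rewrite E1 E2 E3 Hn_stat; lra.
Qed.

Lemma Hb_ge0 n : 0 <= Hb n.
Proof. exact: Hn_ge0 (rv_blk 0 n). Qed.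

Definition cc j := Hb j.+1 - Hb j.

Lemma cc_step j : cc j.+1 <= cc j.
Proof. have := Hb_ssa 1 j 1; rewrite !addn1 !add1n /cc; lra. Qed.

Lemma cc_mono i j : (i <= j)%N -> cc j <= cc i.
Proof.
elim: j => [|j IH]; first by rewrite leqn0 => /eqP ->.
rewrite leq_eqVlt => /orP[/eqP ->//|]; rewrite ltnS => /IH.
exact: le_trans (cc_step j).
Qed.

Lemma Hb_lin j k : Hb (j + k) <= Hb j + k%:R * cc j.
Proof.
elim: k => [|k IH]; first by rewrite addn0 mul0r addr0.
have := @cc_mono j (j + k) (leq_addr k j) => h.
have e : Hb (j + k.+1) = Hb (j + k) + cc (j + k) by rewrite /cc addnS; lra.
rewrite e -natr1; lra.
Qed.

Lemma Hb_ncc N : N%:R * cc N <= Hb N.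
Proof.
elim: N => [|N IH]; first by rewrite mul0r Hb_ge0.
have := cc_step N; have := Hb_ge0 N.
have e : Hb N.+1 = Hb N + cc N by rewrite /cc; lra.
rewrite e -natr1 => h0 h1.
have hN : 0 <= N%:R :> R by [].
nra.
Qed.

Lemma a_step N : (0 < N)%N -> Hb N.+1 / N.+1%:R <= Hb N / N%:R.
Proof.
move=> N0; rewrite ler_pdivrMr ?ltr0n // mulrAC ler_pdivlMr ?ltr0n //.
have := Hb_ncc N; have e : Hb N.+1 = Hb N + cc N by rewrite /cc; lra.
rewrite e -natr1 => h; nra.
Qed.

Definition aseq n := Hb n / n%:R.

Lemma aseq_cvg : aseq @ \oo --> limn aseq.
Proof.
have nb : nonincreasing_seq (fun n => aseq n.+1).
  by apply/nonincreasing_seqP => n; exact: a_step.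
have lb : has_lbound (range (fun n => aseq n.+1)).
  by exists 0 => x [n _ <-]; rewrite /aseq divr_ge0 ?Hb_ge0.
have := nonincreasing_cvgn nb lb; rewrite cvg_shiftS => c.
by rewrite (cvg_lim _ c).
Qed.

Lemma h_le_a N : (0 < N)%N -> limn aseq <= aseq N.
Proof.
case: N => // N _.
have nb : nonincreasing_seq (fun n => aseq n.+1).
  by apply/nonincreasing_seqP => n; exact: a_step.
have c : (fun n => aseq n.+1) @ \oo --> limn aseq by rewrite cvg_shiftS; exact: aseq_cvg.
have := nonincreasing_cvgn_ge nb (cvgP _ c) N.
by rewrite (cvg_lim _ c).
Qed.

Lemma h_le_cc j : limn aseq <= cc j.
Proof.
rewrite leNgt; apply/negP => lt.
set h := limn aseq in lt *.
set D := Hb j - j%:R * h. set g := h - cc j.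
have g0 : 0 < g by rewrite /g subr_gt0.
pose k := (Num.bound (`|D| / g)).+1.
have hk : `|D| / g < k%:R.
  have := @archi_boundP R (`|D| / g) (divr_ge0 (normr_ge0 _) (ltW g0)).
  by move/lt_le_trans; apply; rewrite ler_nat.
rewrite ltr_pdivrMr // in hk.
have := @h_le_a (j + k) (leq_trans (ltn0Sn _) (leq_addl j k)).
rewrite /aseq ler_pdivlMr ?ltr0n ?addn_gt0 ?orbT // natrD => h1.
have h2 := Hb_lin j k.
have h3 : D <= `|D| := ler_norm D.
rewrite mulrDr in h1.
have h1' : h * j%:R + h * k%:R <= Hb (j + k) := h1.
move: hk h1' h2 h3; rewrite /D /g; clear h1; clearbody k h => hk h1 h2 h3.
rewrite mulrBr in hk; lra.
Qed.

Lemma Hb_diff m n : n%:R * limn aseq <= Hb (m + n) - Hb m.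
Proof.
elim: n => [|n IH]; first by rewrite addn0 mul0r subrr.
have := h_le_cc (m + n).
have e : Hb (m + n.+1) = Hb (m + n) + cc (m + n) by rewrite /cc addnS; lra.
rewrite e -natr1; lra.
Qed.

End Proc.

Section EtaLemmas.
Context {R : realType}.

Lemma gibbs_term' (x y : R) : 0 <= x -> 0 <= y -> (0 < x -> 0 < y) ->
  x * ln y - x * ln x <= y - x.
Proof.
move=> x0 y0 xy; have [->|xp] := eqVneq x 0; first by rewrite !mul0r subr0 subr0.
have xp' : 0 < x by rewrite lt0r xp x0.
have yp := xy xp'.
rewrite -mulrBr -ln_div ?posrE //.
have H : ln (y / x) <= y / x - 1.
  have := @le_ln1Dx R (y / x - 1); rewrite addrCA subrr addr0; apply.
  by rewrite ltrBrDl subrr divr_gt0.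
apply: le_trans (ler_wpM2l x0 H) _.
by rewrite le_eqVlt; apply/orP; left; apply/eqP; field.
Qed.

Lemma eta_le_ln2 (p : R) : 0 <= p <= 1 -> Defs.eta p <= ln 2.
Proof.
case/andP => p0 p1.
have h2 : ln (2^-1 : R) = - ln 2 by rewrite lnV ?posrE.
have i0 : (0 : R) < 2^-1 by rewrite invr_gt0.
have := @gibbs_term' p 2^-1 p0 (ltW i0) (fun _ => i0).
have q0 : 0 <= 1 - p by rewrite subr_ge0.
have := @gibbs_term' (1 - p) 2^-1 q0 (ltW i0) (fun _ => i0).
have e2 : (2^-1 : R) * 2 = 1 by rewrite mulVf ?pnatr_eq0.
rewrite h2 /Defs.eta; lra.
Qed.

Lemma ln_mono (a b : R) : 0 < a -> a <= b -> ln a <= ln b.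
Proof. by move=> a0 ab; rewrite ler_ln ?posrE // (lt_le_trans a0 ab). Qed.

Lemma eta_anti (a b : R) : 2^-1 <= a -> a <= b -> b <= 1 -> Defs.eta b <= Defs.eta a.
Proof.
move=> ha ab b1.
have a0 : 0 < a by apply: lt_le_trans ha; rewrite invr_gt0.
have b0 : 0 <= b by apply: ltW; exact: lt_le_trans ab.
have g1 := @gibbs_term' b a b0 (ltW a0) (fun _ => a0).
have q0 : 0 <= 1 - b by rewrite subr_ge0.
have q1 : 0 <= 1 - a by rewrite subr_ge0 (le_trans ab).
have g2 := @gibbs_term' (1 - b) (1 - a) q0 q1 (fun h => lt_le_trans h (lerB (lexx 1) ab)).
have L : ln (1 - a) <= ln a.
  have [a1|a1] := leP (1 - a) 0; first by rewrite ln0 // ln_ge0 // -subr_le0.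
  apply: ln_mono => //; move: ha; rewrite -[X in X <= a -> _](@mulfK _ 2) ?pnatr_eq0 //.
  move=> ha; lra.
have M : (b - a) * (ln (1 - a) - ln a) <= 0.
  by apply: mulr_ge0_le0; rewrite ?subr_ge0 ?subr_le0.
rewrite /Defs.eta; move: M; rewrite mulrBr !mulrBl; lra.
Qed.

Lemma xlnx_sqrt (q : R) : 0 <= q <= 1 -> - (q * ln q) <= 2 * Num.sqrt q.
Proof.
case/andP => q0 q1; have [->|qn] := eqVneq q 0; first by rewrite mul0r oppr0 sqrtr0 mulr0.
have qp : 0 < q by rewrite lt0r qn q0.
set y := Num.sqrt q.
have yq : q = y * y by rewrite -expr2 sqr_sqrtr.
have y0 : 0 < y by rewrite sqrtr_gt0.
have g := @gibbs_term' y 1 (ltW y0) ler01 (fun _ => ltr01).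
rewrite ln1 mulr0 sub0r in g.
have y1 : y <= 1 by move: q1; rewrite yq => h; nra.
rewrite {1 2}yq lnM ?posrE //.
have : - (y * ln y) <= 1 by lra.
nra.
Qed.

Lemma eta_small (p : R) : 0 <= p <= 1 -> Defs.eta p <= 3 * Num.sqrt (1 - p).
Proof.
case/andP => p0 p1.
have q01 : 0 <= 1 - p <= 1 by apply/andP; split; lra.
have h1 := @xlnx_sqrt (1 - p) q01.
have g := @gibbs_term' p 1 p0 ler01 (fun _ => ltr01).
rewrite ln1 mulr0 sub0r in g.
have gen : forall y : R, 0 <= y -> y * y <= 1 -> y * y <= y.
  move=> y y0 q1.
  have y1 : y <= 1.
    rewrite leNgt; apply/negP => h.
    have : 0 < (y - 1) * y by apply: mulr_gt0; lra.
    rewrite mulrBl mul1r; lra.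
  have hh : 0 <= y * (1 - y) by apply: mulr_ge0; rewrite ?subr_ge0.
  rewrite mulrBr mulr1 in hh; lra.
have sq : 1 - p <= Num.sqrt (1 - p).
  case/andP: q01 => q0 q1.
  have yq : 1 - p = Num.sqrt (1 - p) * Num.sqrt (1 - p) by rewrite -expr2 sqr_sqrtr.
  have := gen (Num.sqrt (1 - p)) (sqrtr_ge0 _); rewrite -yq; exact.
rewrite /Defs.eta; lra.
Qed.

End EtaLemmas.

Section Main.
Context {R : realType} {d : measure_display} {Omega : measurableType d}
  (P : probability Omega R) {A : finType} (X : int -> Omega -> A)
  (Z : nat -> Omega -> bool) (s : nat -> seq A -> bool).
Hypotheses (hX : process_measurable X) (hS : stationary P X) (hZ : iid_fair_bits P Z).

Definition SS n k : Omega -> bool := fun o => s k (blk X 0 n o).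
Definition WW n m k : Omega -> bool := fun o => s k (blk X n%:Z m o).

Lemma hZr k : rv (Z k).
Proof. by case: hZ => mZ _ _ v; exact: mZ. Qed.

Lemma rv_SS n k : rv (SS n k).
Proof. exact: (rv_comp P (fun y : n.-tuple A => s k y) (rv_blk P X hX 0 n)). Qed.

Lemma rv_WW n m k : rv (WW n m k).
Proof. exact: (rv_comp P (fun y : m.-tuple A => s k y) (rv_blk P X hX n%:Z m)). Qed.

Lemma core n m (l : seq nat) : uniq l ->
  (size l)%:R * ln 2
  - \sum_(k <- l) eta' (pm P (fun o => SS n k o == Z k o) true)
  - \sum_(k <- l) eta' (pm P (fun o => WW n m k o == Z k o) true)
  <= Hb P X n + Hb P X m - Hb P X (n + m).
Proof.
move=> ul.
have hX1 := rv_blk P X hX 0 n. have hY := rv_blk P X hX n%:Z m.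
have hZs := @rv_bits _ _ _ P Z l hZr.
have hSs := @rv_bits _ _ _ P (SS n) l (rv_SS n).
have hWs := @rv_bits _ _ _ P (WW n m) l (rv_WW n m).
have E_Y : Hn P (blk X n%:Z m) = Hb P X m := Hn_stat P X hS n%:Z m.
have E_XY : Hn P (pr (blk X 0 n) (blk X n%:Z m)) = Hb P X (n + m).
  by rewrite /Hb (Hn_blk_cat P X hX) add0r.
have C4 : Hn P (pr (blk X 0 n) (blk X n%:Z m)) - Hn P (blk X n%:Z m) <=
          Hn P (pr (blk X 0 n) (bits (WW n m) l)) - Hn P (bits (WW n m) l) :=
  DP P (fun y : m.-tuple A => map_tuple (fun k => s k y) (in_tuple l)) hX1 hY.
have C5a := SSA P hX1 hWs hZs.
have C5b := Hn_mono P (rv_pr hX1 hWs) hZs.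
have C5c := Hn_swap P hZs (rv_pr hX1 hWs).
have C6 := FV P Z (WW n m) hZr (rv_WW n m) l.
have C6s := Hn_swap P hWs hZs.
have C2 : Hn P (pr (bits Z l) (blk X 0 n)) - Hn P (blk X 0 n) <=
          Hn P (pr (bits Z l) (bits (SS n) l)) - Hn P (bits (SS n) l) :=
  DP P (fun x : n.-tuple A => map_tuple (fun k => s k x) (in_tuple l)) hZs hX1.
have C3 := FV P Z (SS n) hZr (rv_SS n) l.
have C2s := Hn_swap P hX1 hZs.
have C1 := Hn_bitsZ P Z l hZ ul.
rewrite E_Y E_XY in C4.
have : Hb P X n = Hn P (blk X 0 n) by [].
lra.
Qed.

Lemma pm_eqb (f g : Omega -> bool) :
  pm P (fun o => f o == g o) true = fine (P [set o | f o = g o]).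
Proof.
rewrite /pm; congr (fine (P _)); apply/seteqP; split => o /=; first by move/eqP.
by move=> ->; rewrite eqxx.
Qed.

Lemma P_eqb (f g : Omega -> bool) : rv f -> rv g ->
  P [set o | f o = g o] = (pm P (fun o => f o == g o) true)%:E.
Proof.
move=> hf hg; rewrite -(pmE P (f := fun o => f o == g o)).
  by congr (P _); apply/seteqP; split => o /=; [move=> ->; rewrite eqxx | move/eqP].
exact: (rv_comp P (fun p : bool * bool => p.1 == p.2) (rv_pr hf hg)).
Qed.

Lemma sum_le_seq (l : seq nat) (f : nat -> R) (c : R) :
  (forall k, k \in l -> f k <= c) -> \sum_(k <- l) f k <= (size l)%:R * c.
Proof.
elim: l => [|k l IH] H; first by rewrite big_nil mul0r.
rewrite big_cons /= -natr1 mulrDl mul1r addrC lerD //.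
  by apply: IH => j jl; apply: H; rewrite in_cons jl orbT.
by apply: H; rewrite in_cons eqxx.
Qed.

Lemma near_all (Q : nat -> nat -> Prop) (l : seq nat) :
  (forall k, \forall m \near \oo, Q k m) ->
  \forall m \near \oo, forall k, k \in l -> Q k m.
Proof.
move=> H; elim: l => [|k l IH].
  by apply: nearW => m k; rewrite in_nil.
apply: filterS2 (H k) IH => m a b j; rewrite in_cons => /orP[/eqP ->//|].
exact: b.
Qed.

Lemma sqrt_lt (q r : R) : 0 <= q -> 0 < r -> q < r ^+ 2 -> Num.sqrt q < r.
Proof.
move=> q0 r0 qr; rewrite -(@ltr_sqrt _ q (r ^+ 2)) ?exprn_gt0 // in qr.
by rewrite sqrtr_sqr gtr0_norm in qr.
Qed.

Hypothesis hcv : forall (k : nat) (t : int),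
    (fun n => fine (P [set o | s k (blk X t n o) = Z k o])) @ \oo --> (1 : R).

Lemma exists_m n (l : seq nat) e : 0 < e ->
  exists m, \sum_(k <- l) eta' (pm P (fun o => WW n m k o == Z k o) true) <= e.
Proof.
move=> e0.
pose r := e / (3 * ((size l)%:R + 1)).
have r0 : 0 < r by rewrite /r divr_gt0 // mulr_gt0 // ltr_wpDl.
have H : forall k, \forall m \near \oo,
    `|1 - pm P (fun o => WW n m k o == Z k o) true| < r ^+ 2.
  move=> k; have := hcv k n%:Z; move/cvgrPdist_lt => /(_ (r ^+ 2) (exprn_gt0 _ r0)).
  by apply: filterS => m; rewrite pm_eqb.
have [m Hm] := filter_ex (near_all _ l H).
exists m.
apply: le_trans (sum_le_seq _ _ (3 * r) _) _.
  move=> k kl; have := Hm k kl.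
  set p := pm P _ true => hp.
  have p0 : 0 <= p by exact: pm_ge0.
  have p1 : p <= 1 by apply: pm_le1; exact: (rv_comp P (fun p : bool * bool => p.1 == p.2) (rv_pr (rv_WW n m k) (hZr k))).
  have := @eta_small R p (introT andP (conj p0 p1)).
  have sq : Num.sqrt (1 - p) < r.
    apply: sqrt_lt; first by rewrite subr_ge0.
      exact: r0.
    by move: hp; rewrite ger0_norm // subr_ge0.
  have -> : Defs.eta p = eta' p by [].
  lra.
have E : r * (3 * ((size l)%:R + 1)) = e.
  by rewrite /r divfK // gt_eqF // mulr_gt0 // ltr_wpDl.
clearbody r; rewrite mulrDr mulr1 in E; lra.
Qed.

Lemma bound_list n (l : seq nat) (delta : R) : uniq l -> 2^-1 < delta -> delta < 1 ->
  (forall k, k \in l -> (delta%:E <= P [set o | s k (blk X 0 n o) = Z k o])%E) ->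
  (size l)%:R * (ln 2 - Defs.eta delta) <= Hb P X n - n%:R * limn (aseq P X).
Proof.
move=> ul d1 d2 hl.
apply/ler_addgt0Pr => e e0.
have [m hm] := exists_m n l e e0.
have key := core n m l ul.
have hd := Hb_diff P X hX hS m n; rewrite addnC in hd.
have hs : \sum_(k <- l) eta' (pm P (fun o => SS n k o == Z k o) true)
    <= (size l)%:R * Defs.eta delta.
  apply: sum_le_seq => k kl.
  have := hl k kl.
  have -> : P [set o | s k (blk X 0 n o) = Z k o] =
      (pm P (fun o => SS n k o == Z k o) true)%:E := P_eqb (SS n k) (Z k) (rv_SS n k) (hZr k).
  rewrite lee_fin => hk.
  have p1 : pm P (fun o => SS n k o == Z k o) true <= 1.
    apply: pm_le1.
    exact: (rv_comp P (fun p : bool * bool => p.1 == p.2) (rv_pr (rv_SS n k) (hZr k))).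
  exact: eta_anti (ltW d1) hk p1.
rewrite mulrBr; lra.
Qed.

End Main.

Section Final.
Context {R : realType}.

Lemma sum_ind (b : pred nat) N :
  \sum_(0 <= k < N) (if b k then 1 else 0 : R) = (size [seq k <- iota 0 N | b k])%:R.
Proof.
elim: N => [|N IH]; first by rewrite big_geq.
rewrite big_nat_recr // IH -[in iota 0 N.+1]addn1 iotaD filter_cat size_cat natrD add0n /=.
by case: (b N); rewrite ?addr0.
Qed.

Lemma ecard_bound (U : set nat) (c D : R) : 0 < c ->
  (forall N, (size [seq k <- iota 0 N | `[< U k >]])%:R * c <= D) ->
  (@ecard R U <= (D / c)%:E)%E.
Proof.
move=> c0 H; rewrite /ecard; apply: lime_le.
  by apply: is_cvg_nneseries => k _ _; case: ifP.
apply: nearW => N /=; rewrite sumEFin lee_fin sum_ind ler_pdivlMr //.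
Qed.

End Final.

Theorem theorem8 (R : realType) (d : measure_display) (Omega : measurableType d)
  (P : probability Omega R) (A : finType) (X : int -> Omega -> A)
  (Z : nat -> Omega -> bool) (s : nat -> seq A -> bool) (delta : R) :
  process_measurable X ->
  stationary P X ->
  strongly_nonergodic_with P X Z s ->
  2^-1 < delta < 1 ->
  [/\ forall n : nat, (HU P X Z s delta n <= (block_entropy P X n)%:E)%E,
      (fun n : nat => block_entropy P X n / n%:R) @ \oo --> entropy_rate P X &
      (fun n : nat => HU P X Z s delta n * ((n%:R)^-1)%:E)%E @ \oo
        --> (entropy_rate P X)%:E].
Proof.
move=> hX hS [hZ hcv] /andP[d1 d2].
have Eh : entropy_rate P X = limn (aseq P X) by [].
have EB : forall n, block_entropy P X n = Hb P X n by [].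
have hc : 0 <= ln 2 - Defs.eta delta.
  rewrite subr_ge0; apply: eta_le_ln2; apply/andP; split; last exact: ltW.
  by apply: ltW; apply: lt_trans d1; rewrite invr_gt0.
have hD : forall n, 0 <= Hb P X n - n%:R * limn (aseq P X).
  move=> n; have := Hb_diff P X hX hS 0 n; rewrite add0n.
  have := Hb_ge0 P X hX 0; lra.
have hB : forall n, exists r, 0 <= r <= Hb P X n - n%:R * limn (aseq P X) /\
    ((ln 2 - Defs.eta delta)%:E * ecard (U_set P X Z s delta n) = r%:E)%E.
  move=> n; have [c0|cn] := eqVneq (ln 2 - Defs.eta delta) 0.
    exists 0; rewrite c0 mul0e; split => //; apply/andP; split => //; exact: hD.
  have cp : 0 < ln 2 - Defs.eta delta by rewrite lt0r cn hc.
  have eb := @ecard_bound R (U_set P X Z s delta n) _ (Hb P X n - n%:R * limn (aseq P X)) cp.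
  have {eb} eb : (ecard (U_set P X Z s delta n) <= ((Hb P X n - n%:R * limn (aseq P X)) / (ln 2 - Defs.eta delta))%:E)%E.
    apply: eb => N.
    apply: (bound_list P X Z s hX hS hZ hcv n) => //.
    - by apply: filter_uniq; exact: iota_uniq.
    - by move=> k; rewrite mem_filter => /andP[/asboolP].
  have e0 : (0 <= @ecard R (U_set P X Z s delta n))%E.
    rewrite /ecard; apply: lime_ge; first by apply: is_cvg_nneseries => k _ _; case: ifP.
    by apply: nearW => N /=; apply: sume_ge0 => k _; case: ifP.
  have ef : @ecard R (U_set P X Z s delta n) \is a fin_num.
    by rewrite ge0_fin_numE // (le_lt_trans eb) // ltry.
  exists ((ln 2 - Defs.eta delta) * fine (ecard (U_set P X Z s delta n))).
  rewrite -(fineK ef) lee_fin in eb.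
  split; last by rewrite EFinM fineK.
  apply/andP; split; first by rewrite mulr_ge0 // fine_ge0.
  by rewrite mulrC -ler_pdivlMr.
pose r n := fine ((ln 2 - Defs.eta delta)%:E * @ecard R (U_set P X Z s delta n))%E.
have hr : forall n, 0 <= r n <= Hb P X n - n%:R * limn (aseq P X) /\
    ((ln 2 - Defs.eta delta)%:E * @ecard R (U_set P X Z s delta n) = (r n)%:E)%E.
  by move=> n; have [r0 [hr0 e]] := hB n; rewrite /r e /=.
have EHU : forall n, HU P X Z s delta n = (limn (aseq P X) * n%:R + r n)%:E.
  by move=> n; rewrite /HU Eh (hr n).2 EFinD.
split.
- move=> n; rewrite EHU EB lee_fin; have [/andP[_ h2] _] := hr n; lra.
- have E2 : (fun n => block_entropy P X n / n%:R) = aseq P X by [].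
  by rewrite E2 Eh; move: (aseq_cvg P X hX hS).
- apply: cvg_EFin.
    by apply: nearW => n; rewrite EHU -EFinM.
  rewrite Eh; apply: (@squeeze_cvgr _ _ _ _ (fun _ => limn (aseq P X)) (aseq P X)).
  + near=> n.
    have n0 : (0 < n)%N by near: n; exists 1.
    rewrite /= EHU -EFinM /= /aseq.
    have np : 0 < n%:R :> R by rewrite ltr0n.
    have [/andP[r0 h2] _] := hr n.
    rewrite mulrDl mulfK ?gt_eqF //; apply/andP; split.
      by rewrite lerDl divr_ge0 // ltW.
    rewrite -[X in X + _](mulfK (lt0r_neq0 np)) -mulrDl.
    by apply: ler_wpM2r; [rewrite invr_ge0 ltW | lra].
  + exact: cvg_cst.
  + by move: (aseq_cvg P X hX hS).
Unshelve. all: end_near.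
Qed.
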